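(* Let $S$ be a $0$-left cancellative semigroup admitting least common multiples, and let $\pi$ be a representation of $S$ on a set $\Omega$ which respects least common multiples. Then the inverse subsemigroup $\mathcal I(\Omega,\pi)$ of $\mathcal I(\Omega)$ generated by $\{\pi_s:s\in S\}$ equals $$\{\pi_u f_\Lambda \pi_v^{-1} : \Lambda\subseteq\tilde S \text{ finite},\ \Lambda\cap S\neq\emptyset,\ u,v\in\Lambda\}.$$
   Context: $S$ is a semigroup with zero $0$; it is $0$-left cancellative if $st=sr\neq0$ implies $t=r$. Let $\tilde S=S\cup\{1\}$ where $1\notin S$ acts as an identity. For $s,t\in S$, $s$ divides $t$ ($s\mid t$) if $t\in s\tilde S$. An element $r\in S$ is a least common multiple of $s,t\in S$ if $sS\cap tS=rS$ and both $s\mid r$ and $t\mid r$; $S$ admits least common multiples if every pair of elements has one. $\mathcal I(\Omega)$ is the inverse semigroup of all partial bijections of $\Omega$. A representation of $S$ on $\Omega$ is a map $s\mapsto\pi_s\in\mathcal I(\Omega)$ with $\pi_0$ the empty map and $\pi_s\circ\pi_t=\pi_{st}$. Write $E_s$ for the range of $\pi_s$. $\pi$ respects least common multiples if $E_r=E_s\cap E_t$ whenever $r$ is a least common multiple of $s$ and $t$. Extend $\pi$ to $\tilde S$ by $\pi_1=\mathrm{id}_\Omega$. For $u\in\tilde S$ let $f_u=\pi_u^{-1}\pi_u$ (identity on the domain of $\pi_u$), and for finite nonempty $\Lambda\subseteq\tilde S$ let $f_\Lambda=\prod_{u\in\Lambda}f_u$. *)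

(* Defs.v *)
From Stdlib Require Import List.
Import ListNotations.

(* Partial maps on Omega as relations: [r x y] means r maps x to y. *)
Definition prel (Omega : Type) := Omega -> Omega -> Prop.

Definition is_pbij {Omega : Type} (r : prel Omega) : Prop :=
  (forall x y z, r x y -> r x z -> y = z) /\
  (forall x y z, r x z -> r y z -> x = y).

(* Composition [pcomp f g] = f o g (apply g first, then f). *)
Definition pcomp {Omega : Type} (f g : prel Omega) : prel Omega :=
  fun x z => exists y, g x y /\ f y z.

Definition pinv {Omega : Type} (f : prel Omega) : prel Omega :=
  fun x y => f y x.

Definition pid (Omega : Type) : prel Omega := fun x y => x = y.

Definition pempty (Omega : Type) : prel Omega := fun _ _ => False.

Definition prange {Omega : Type} (f : prel Omega) : Omega -> Prop :=
  fun y => exists x, f x y.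

Definition is_semigroup_with_zero {S : Type} (mul : S -> S -> S) (z : S) : Prop :=
  (forall a b c, mul a (mul b c) = mul (mul a b) c) /\
  (forall a, mul z a = z) /\ (forall a, mul a z = z).

Definition zero_left_cancellative {S : Type} (mul : S -> S -> S) (z : S) : Prop :=
  forall s t r, mul s t = mul s r -> mul s t <> z -> t = r.

(* s | t iff t in s S~, S~ = S ∪ {1}. *)
Definition sdivides {S : Type} (mul : S -> S -> S) (s t : S) : Prop :=
  t = s \/ exists x, t = mul s x.

Definition is_lcm {S : Type} (mul : S -> S -> S) (s t r : S) : Prop :=
  (forall x, ((exists a, x = mul s a) /\ (exists b, x = mul t b))
             <-> exists c, x = mul r c) /\
  sdivides mul s r /\ sdivides mul t r.

Definition admits_lcm {S : Type} (mul : S -> S -> S) : Prop :=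
  forall s t, exists r, is_lcm mul s t r.

Definition is_representation {S Omega : Type} (mul : S -> S -> S) (z : S)
  (pi : S -> prel Omega) : Prop :=
  (forall s, is_pbij (pi s)) /\
  pi z = pempty Omega /\
  (forall s t, pcomp (pi s) (pi t) = pi (mul s t)).

Definition respects_lcm {S Omega : Type} (mul : S -> S -> S)
  (pi : S -> prel Omega) : Prop :=
  forall s t r, is_lcm mul s t r ->
    forall y, prange (pi r) y <-> (prange (pi s) y /\ prange (pi t) y).

(* Extension to S~ = option S, with None playing the role of 1. *)
Definition pit {S Omega : Type} (pi : S -> prel Omega) (u : option S) : prel Omega :=
  match u with Some s => pi s | None => pid Omega end.

Definition fu {S Omega : Type} (pi : S -> prel Omega) (u : option S) : prel Omega :=
  pcomp (pinv (pit pi u)) (pit pi u).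

Definition fLam {S Omega : Type} (pi : S -> prel Omega) (L : list (option S)) : prel Omega :=
  fold_right (fun u acc => pcomp (fu pi u) acc) (pid Omega) L.

Inductive gen_inv_sub {S Omega : Type} (pi : S -> prel Omega) : prel Omega -> Prop :=
  | gen_base : forall s, gen_inv_sub pi (pi s)
  | gen_comp : forall f g, gen_inv_sub pi f -> gen_inv_sub pi g ->
                 gen_inv_sub pi (pcomp f g)
  | gen_inv : forall f, gen_inv_sub pi f -> gen_inv_sub pi (pinv f).

(* Main.v *)
Require Import Defs.
From Stdlib Require Import List.
Import ListNotations.
From Stdlib Require Import FunctionalExtensionality PropExtensionality Classical.

Lemma rel_ext {Omega : Type} (f g : prel Omega) :
  (forall x y, f x y <-> g x y) -> f = g.
Proof.
  intro H. apply functional_extensionality; intro x.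
  apply functional_extensionality; intro y.
  apply propositional_extensionality. apply H.
Qed.

Definition omul {S : Type} (mul : S -> S -> S) (p q : option S) : option S :=
  match p, q with
  | Some s, Some t => Some (mul s t)
  | None, _ => q
  | _, None => p
  end.

Definition Dom {S Omega : Type} (pi : S -> prel Omega) (L : list (option S)) (y : Omega) :=
  forall l, In l L -> exists w, pit pi l y w.

Lemma pit_pbij {S Omega : Type} (pi : S -> prel Omega) :
  (forall s, is_pbij (pi s)) -> forall u, is_pbij (pit pi u).
Proof.
  intros H [s|]; simpl; [apply H|].
  unfold pid; split; intros; congruence.
Qed.

Lemma pit_omul {S Omega : Type} (mul : S -> S -> S) (pi : S -> prel Omega) :
  (forall s t, pcomp (pi s) (pi t) = pi (mul s t)) ->
  forall p q t z, pit pi (omul mul p q) t z <-> exists m, pit pi q t m /\ pit pi p m z.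
Proof.
  intros Hm [s|] [s'|] t z; simpl; unfold pid.
  - rewrite <- Hm. unfold pcomp. tauto.
  - split; [intro; exists t; auto | intros [m [-> H]]; auto].
  - split; [intro; exists z; auto | intros [m [H ->]]; auto].
  - split; [intro; exists z; auto | intros [m [H ->]]; auto].
Qed.

Lemma fLam_sem {S Omega : Type} (pi : S -> prel Omega) :
  (forall s, is_pbij (pi s)) ->
  forall L x y, fLam pi L x y <-> x = y /\ Dom pi L x.
Proof.
  intros Hpb L. induction L as [|a L IH]; intros x y; simpl.
  - unfold pid, Dom; simpl. intuition.
  - unfold pcomp, fu, pcomp, pinv. split.
    + intros [m [Hl [n [Ha Ha']]]]. apply IH in Hl as [-> HD].
      destruct (pit_pbij pi Hpb a) as [_ Hi].
      pose proof (Hi _ _ _ Ha Ha') as ->.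
      split; auto. intros l [<-|Hl]; eauto.
    + intros [-> HD]. exists y. split.
      * apply IH. split; auto. intros l Hl; apply HD; simpl; auto.
      * destruct (HD a (or_introl eq_refl)) as [w Hw]. exists w; auto.
Qed.

Lemma RHS_sem {S Omega : Type} (pi : S -> prel Omega) :
  (forall s, is_pbij (pi s)) ->
  forall L u v x z,
    pcomp (pit pi u) (pcomp (fLam pi L) (pinv (pit pi v))) x z <->
    exists y, pit pi v y x /\ Dom pi L y /\ pit pi u y z.
Proof.
  intros Hpb L u v x z. unfold pcomp, pinv. split.
  - intros [y [[y' [H1 H2]] H3]]. apply fLam_sem in H2 as [-> HD]; auto.
    exists y; auto.
  - intros [y [H1 [H2 H3]]]. exists y; split; auto. exists y; split; auto.
    apply fLam_sem; auto.
Qed.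

Lemma pcomp_id_l {Omega : Type} (f : prel Omega) : pcomp (pid Omega) f = f.
Proof. apply rel_ext; intros x y; unfold pcomp, pid; split;
  [intros [m [H ->]]; auto | intro; exists y; auto]. Qed.

Lemma pcomp_id_r {Omega : Type} (f : prel Omega) : pcomp f (pid Omega) = f.
Proof. apply rel_ext; intros x y; unfold pcomp, pid; split;
  [intros [m [-> H]]; auto | intro; exists x; auto]. Qed.

Lemma pinv_pid {Omega : Type} : pinv (pid Omega) = pid Omega.
Proof. apply rel_ext; intros x y; unfold pinv, pid; split; auto. Qed.

Lemma fLam_nones {S Omega : Type} (pi : S -> prel Omega) L :
  (forall s, ~ In (Some s) L) -> fLam pi L = pid Omega.
Proof.
  induction L as [|a L IH]; intros H; simpl; auto.
  destruct a as [s|]. { exfalso; apply (H s); simpl; auto. }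
  rewrite IH by (intros s Hs; apply (H s); simpl; auto).
  unfold fu; simpl. rewrite pinv_pid, !pcomp_id_l. reflexivity.
Qed.

Lemma fLam_gen {S Omega : Type} (pi : S -> prel Omega) L :
  (exists s, In (Some s) L) -> gen_inv_sub pi (fLam pi L).
Proof.
  induction L as [|a L IH]; intros [s Hs]; simpl in *; [contradiction|].
  destruct (classic (exists s', In (Some s') L)) as [[s' Hs']|Hn].
  - destruct a as [t|].
    + apply gen_comp; [|apply IH; eauto]. unfold fu; simpl.
      apply gen_comp; [apply gen_inv|]; apply gen_base.
    + unfold fu; simpl. rewrite pinv_pid, pcomp_id_l, pcomp_id_l. apply IH; eauto.
  - rewrite (fLam_nones pi L (fun s0 H0 => Hn (ex_intro _ s0 H0))), pcomp_id_r.
    destruct Hs as [Ha|Hs]; [subst a|exfalso; apply Hn; eauto].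
    unfold fu; simpl. apply gen_comp; [apply gen_inv|]; apply gen_base.
Qed.

Lemma lcm_opt {S Omega : Type} (mul : S -> S -> S) (pi : S -> prel Omega) :
  admits_lcm mul -> respects_lcm mul pi ->
  forall v w, exists a b, omul mul w b = omul mul v a /\
    forall y, (exists q, pit pi v q y) -> (exists p, pit pi w p y) ->
      exists t, pit pi (omul mul v a) t y.
Proof.
  intros Hl Hr [s|] [t|].
  - destruct (Hl s t) as [r Hrl].
    destruct Hrl as [H1 [Hs Ht]] eqn:E.
    assert (exists a, Some r = omul mul (Some s) a) as [a Ha].
    { destruct Hs as [->|[x ->]]; [exists None|exists (Some x)]; reflexivity. }
    assert (exists b, Some r = omul mul (Some t) b) as [b Hb].
    { destruct Ht as [->|[x ->]]; [exists None|exists (Some x)]; reflexivity. }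
    exists a, b. rewrite <- Ha, <- Hb. split; auto.
    intros y Hy1 Hy2. simpl. apply (Hr _ _ _ Hrl). split; auto.
  - exists None, (Some s). split; [reflexivity|]. simpl. auto.
  - exists (Some t), None. split; [reflexivity|]. simpl. auto.
  - exists None, None. split; [reflexivity|]. simpl. auto.
Qed.

Theorem theorem7p11 (S Omega : Type) (mul : S -> S -> S) (z : S)
  (pi : S -> prel Omega)
  (HS : is_semigroup_with_zero mul z)
  (Hcanc : zero_left_cancellative mul z)
  (Hlcm : admits_lcm mul)
  (Hrep : is_representation mul z pi)
  (Hresp : respects_lcm mul pi) :
  forall g : prel Omega,
    gen_inv_sub pi g <->
    exists (L : list (option S)) (u v : option S),
      (exists s, In (Some s) L) /\ In u L /\ In v L /\
      g = pcomp (pit pi u) (pcomp (fLam pi L) (pinv (pit pi v))).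
Proof.
  destruct Hrep as [Hpb [_ Hm]].
  assert (Hom := pit_omul mul pi Hm).
  assert (Hbij := pit_pbij pi Hpb).
  intro g. split.
  - intro Hg.
    assert (exists L u v, (exists s, In (Some s) L) /\ In u L /\ In v L /\
      forall x z, g x z <-> exists y, pit pi v y x /\ Dom pi L y /\ pit pi u y z)
      as (L & u & v & H1 & H2 & H3 & H4).
    { induction Hg as [s|f g Hf IHf Hg IHg|f Hf IHf].
      - exists [Some s; None], (Some s), None. simpl.
        split; [eauto|]. split; [auto|]. split; [auto|].
        intros x zz. unfold pid, Dom. simpl. split.
        + intros H. exists x. split; auto. split; auto.
          intros l [<-|[<-|[]]]; simpl; unfold pid; eauto.
        + intros [y [-> [_ H]]]. auto.
      - destruct IHf as (L & u & v & HL & Hu & Hv & Hf').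
        destruct IHg as (M & w & k & HM & Hw & Hk & Hg').
        destruct (lcm_opt mul pi Hlcm Hresp v w) as (a & b & Hab & Hran).
        exists (map (fun l => omul mul l a) L ++ omul mul v a :: map (fun m => omul mul m b) M),
          (omul mul u a), (omul mul k b).
        split; [|split; [|split]].
        + destruct HL as [s Hs]. destruct a as [a|].
          * exists (mul s a). apply in_or_app; left.
            change (Some (mul s a)) with ((fun l => omul mul l (Some a)) (Some s)).
            apply in_map; auto.
          * exists s. apply in_or_app; left.
            change (Some s) with ((fun l => omul mul l None) (Some s)).
            apply in_map; auto.
        + apply in_or_app; left. apply (in_map (fun l => omul mul l a)); auto.
        + apply in_or_app; right; right. apply (in_map (fun m => omul mul m b)); auto.
        + intros x0 z0. unfold pcomp. split.
          * intros [y [Hgy Hfy]].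
            apply Hg' in Hgy as (p & Hp1 & Hp2 & Hp3).
            apply Hf' in Hfy as (q & Hq1 & Hq2 & Hq3).
            destruct (Hran y (ex_intro _ q Hq1) (ex_intro _ p Hp3)) as [t Ht].
            pose proof Ht as Ht'. rewrite <- Hab in Ht'.
            apply Hom in Ht as (m & Hm1 & Hm2).
            apply Hom in Ht' as (m' & Hm1' & Hm2').
            assert (m = q) as -> by (apply (proj2 (Hbij v) _ _ _ Hm2 Hq1)).
            assert (m' = p) as -> by (apply (proj2 (Hbij w) _ _ _ Hm2' Hp3)).
            exists t. split; [apply Hom; eauto|split; [|apply Hom; eauto]].
            intros l Hl. apply in_app_or in Hl as [Hl|[<-|Hl]].
            -- apply in_map_iff in Hl as (l0 & <- & Hl0).
               destruct (Hq2 l0 Hl0) as [w0 Hw0]. exists w0. apply Hom; eauto.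
            -- exists y. apply Hom; eauto.
            -- apply in_map_iff in Hl as (l0 & <- & Hl0).
               destruct (Hp2 l0 Hl0) as [w0 Hw0]. exists w0. apply Hom; eauto.
          * intros (t & Ht1 & Ht2 & Ht3).
            apply Hom in Ht1 as (p & Hp1 & Hp2).
            apply Hom in Ht3 as (q & Hq1 & Hq2).
            destruct (Ht2 (omul mul v a)) as [y Hy].
            { apply in_or_app; right; left; auto. }
            pose proof Hy as Hy'. rewrite <- Hab in Hy'.
            apply Hom in Hy as (m & Hm1 & Hm2).
            apply Hom in Hy' as (m' & Hm1' & Hm2').
            assert (m = q) as -> by (apply (proj1 (Hbij a) _ _ _ Hm1 Hq1)).
            assert (m' = p) as -> by (apply (proj1 (Hbij b) _ _ _ Hm1' Hp1)).
            exists y. split.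
            -- apply Hg'. exists p. split; auto. split; auto.
               intros l Hl.
               destruct (Ht2 (omul mul l b)) as [w0 Hw0].
               { apply in_or_app; right; right. apply (in_map (fun m => omul mul m b)); auto. }
               apply Hom in Hw0 as (n & Hn1 & Hn2).
               assert (n = p) as -> by (apply (proj1 (Hbij b) _ _ _ Hn1 Hp1)). eauto.
            -- apply Hf'. exists q. split; auto. split; auto.
               intros l Hl.
               destruct (Ht2 (omul mul l a)) as [w0 Hw0].
               { apply in_or_app; left. apply (in_map (fun m => omul mul m a)); auto. }
               apply Hom in Hw0 as (n & Hn1 & Hn2).
               assert (n = q) as -> by (apply (proj1 (Hbij a) _ _ _ Hn1 Hq1)). eauto.
      - destruct IHf as (L & u & v & HL & Hu & Hv & Hf').
        exists L, v, u. split; auto. split; auto. split; auto.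
        intros x zz. unfold pinv. rewrite Hf'.
        split; intros (y & A & B & C); exists y; auto. }
    exists L, u, v. split; auto. split; auto. split; auto.
    apply rel_ext. intros x zz. rewrite H4. symmetry. apply RHS_sem; auto.
  - intros (L & u & v & HL & Hu & Hv & ->).
    assert (HF := fLam_gen pi L HL).
    destruct u as [s|]; destruct v as [t|]; simpl;
      rewrite ?pinv_pid, ?pcomp_id_l, ?pcomp_id_r;
      first
      [ exact HF
      | apply gen_comp; [apply gen_base|exact HF]
      | apply gen_comp; [exact HF|apply gen_inv, gen_base]
      | apply gen_comp; [apply gen_base|apply gen_comp; [exact HF|apply gen_inv, gen_base]] ].
Qed.
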